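(* (dS shift.) Consider the single-fluid shifted system with $\sigma>0$, and let $t_{\mathrm b},\xi_{\mathrm b},\xi_0,t_0$ be as in the time-interval setup, with $\sigma<h(t_{\mathrm b})^2$, and $b:=\max_{t\in[t_{\mathrm b},t_0]}\sqrt2\,|y_{\mathrm i}(t)|h(t)/l>0$. Then $$\Delta t_{\mathrm b0}\ \ge\ \frac{1}{2\sqrt{2\xi_0}}\,\frac{1}{b\,c\,l}\,\frac{\xi_0-\xi_{\mathrm b}}{\sqrt{1-\sigma/h(t_{\mathrm b})^2}}.$$
   Context: Shifted single-fluid system. Fix real constants $c>0$, $l>0$, $w\in[-1,1]$ and $\sigma\in\mathbb{R}$. Let $I\subseteq\mathbb R$ be an interval and $x,y_{\mathrm r},y_{\mathrm i},z,h$ real $C^1$ functions on $I$ with $h>0$, $z\ge0$. Define $\xi=x^2+\frac{1+w}{2}z^2$. Assume on $I$: $\dot x=[-x+4c\,y_{\mathrm r}y_{\mathrm i}+x\xi]h$, $\dot y_{\mathrm r}=[\xi y_{\mathrm r}-c\,x\,y_{\mathrm i}]h$, $\dot y_{\mathrm i}=[\xi y_{\mathrm i}+c\,x\,y_{\mathrm r}]h$, $\dot z=[-\frac{1+w}{2}+\xi]zh$, $\dot h=-\xi h^2$, with constraints $x^2+4y_{\mathrm r}^2+z^2=1-\sigma/h^2$ and $y_{\mathrm r}^2+y_{\mathrm i}^2=\frac{l^2}{2h^2}$. (Here $\sigma=L^2$ encodes a cosmological constant $\Lambda$ added to the cosine potential, of the sign of $\Lambda$.) Time-interval setup: let $t_{\mathrm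 b}\in I$, $\xi_{\mathrm b}:=\xi(t_{\mathrm b})$, and let $\xi_0$ be a real number with $\xi_0>0$ and $\xi_{\mathrm b}\le\xi_0\le\frac{1+w}{2}$. Assume the set $\{t\in I:\ t\ge t_{\mathrm b},\ \xi(t)=\xi_0\}$ is nonempty and let $t_0$ be its minimum (so $\xi(t)\le\xi_0$ for all $t\in[t_{\mathrm b},t_0]$); put $\Delta t_{\mathrm b0}=t_0-t_{\mathrm b}$. *)

(* Defs.v *)
From Stdlib Require Import Reals Lra.
Open Scope R_scope.

Definition is_interval (I : R -> Prop) : Prop :=
  forall a b t, I a -> I b -> a <= t <= b -> I t.

Definition has_deriv_within (I : R -> Prop) (f : R -> R) (t d : R) : Prop :=
  forall eps, 0 < eps -> exists delta, 0 < delta /\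
    forall s, I s -> Rabs (s - t) < delta ->
      Rabs (f s - f t - d * (s - t)) <= eps * Rabs (s - t).

(* Main.v *)
Require Import Defs.
From Stdlib Require Import Reals Lra.
From Coquelicot Require Import Coquelicot.
Open Scope R_scope.

Definition clamp (a b t : R) := Rmax a (Rmin b t).

Lemma clamp_in a b t : a <= b -> a <= clamp a b t <= b.
Proof. intros; unfold clamp, Rmax, Rmin; repeat destruct Rle_dec; lra. Qed.

Lemma clamp_id a b t : a <= t <= b -> clamp a b t = t.
Proof. intros; unfold clamp, Rmax, Rmin; repeat destruct Rle_dec; lra. Qed.

Lemma clamp_lip a b x y : a <= b -> Rabs (clamp a b y - clamp a b x) <= Rabs (y - x).
Proof.
  intros; unfold clamp, Rmax, Rmin; repeat destruct Rle_dec;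
  unfold Rabs; repeat destruct Rcase_abs; lra.
Qed.

Lemma cont_clamp (I : R -> Prop) f a b
  (HI : forall t, a <= t <= b -> I t) (Hab : a <= b)
  (Hd : forall t, a <= t <= b -> exists d, has_deriv_within I f t d) :
  forall x, continuity_pt (fun t => f (clamp a b t)) x.
Proof.
  intros x0. unfold continuity_pt, continue_in, limit1_in, limit_in.
  intros eps Heps.
  set (u := clamp a b x0).
  assert (Hu : a <= u <= b) by (apply clamp_in; auto).
  destruct (Hd u Hu) as [d0 Hd0].
  destruct (Hd0 1 Rlt_0_1) as [delta [Hdel Hs]].
  assert (Hp : 0 < Rabs d0 + 1) by (pose proof (Rabs_pos d0); lra).
  exists (Rmin delta (eps / (Rabs d0 + 1))). split.
  { apply Rmin_pos; auto. apply Rdiv_lt_0_compat; auto. }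
  intros y [_ Hy]. simpl in Hy |- *. unfold R_dist in *.
  set (v := clamp a b y).
  assert (Hv : a <= v <= b) by (apply clamp_in; auto).
  assert (Hr : Rabs (v - u) <= Rabs (y - x0)) by (apply clamp_lip; auto).
  assert (Hy1 : Rabs (y - x0) < delta /\ Rabs (y - x0) < eps / (Rabs d0 + 1)).
  { unfold Rmin in Hy; destruct Rle_dec; lra. }
  specialize (Hs v (HI v Hv) ltac:(lra)).
  replace (f v - f u) with ((f v - f u - d0 * (v - u)) + d0 * (v - u)) by ring.
  eapply Rle_lt_trans; [apply Rabs_triang|]. rewrite Rabs_mult.
  assert (H2 : Rabs (v - u) * (Rabs d0 + 1) < eps / (Rabs d0 + 1) * (Rabs d0 + 1))
    by (apply Rmult_lt_compat_r; lra).
  replace (eps / (Rabs d0 + 1) * (Rabs d0 + 1)) with eps in H2 by (field; lra).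
  nra.
Qed.

Lemma der_clamp (I : R -> Prop) f a b d t
  (HI : forall t, a <= t <= b -> I t) :
  a < t < b -> has_deriv_within I f t d ->
  is_derive (fun s => f (clamp a b s)) t d.
Proof.
  intros Ht Hd. apply is_derive_Reals. intros eps Heps.
  destruct (Hd (eps/2) ltac:(lra)) as [dl [Hdl Hs]].
  assert (Hpos : 0 < Rmin dl (Rmin (t - a) (b - t))).
  { apply Rmin_pos; auto. apply Rmin_pos; lra. }
  exists (mkposreal _ Hpos). intros hh Hh0 Hhlt. simpl in Hhlt.
  assert (Hb : Rabs hh < dl /\ Rabs hh < t - a /\ Rabs hh < b - t).
  { unfold Rmin in Hhlt; repeat destruct Rle_dec; lra. }
  destruct (Rabs_def2 hh (t - a)) as [Ha1 Ha2]; [lra|].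
  destruct (Rabs_def2 hh (b - t)) as [Hb1 Hb2]; [lra|].
  rewrite (clamp_id a b (t + hh)) by lra. rewrite (clamp_id a b t) by lra.
  specialize (Hs (t + hh) (HI (t + hh) ltac:(lra))).
  replace (t + hh - t) with hh in Hs by ring.
  specialize (Hs ltac:(lra)).
  assert (Hap : 0 < Rabs hh) by (apply Rabs_pos_lt; auto).
  replace ((f (t + hh) - f t) / hh - d) with ((f (t + hh) - f t - d * hh) / hh)
    by (field; auto).
  unfold Rdiv. rewrite Rabs_mult, Rabs_inv.
  apply Rle_lt_trans with (eps / 2); [|lra].
  apply Rmult_le_reg_r with (Rabs hh); auto.
  rewrite Rmult_assoc, Rinv_l by lra. lra.
Qed.

Lemma is_derive_eqv (f : R -> R) x l l' : is_derive f x l -> l = l' -> is_derive f x l'.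
Proof. intros H E; subst; auto. Qed.

Lemma abs_le_sq u Y : 0 <= Y -> u ^ 2 <= Y ^ 2 -> Rabs u <= Y.
Proof. intros; unfold Rabs; destruct Rcase_abs; nra. Qed.

Theorem mainTheorem5
  (c l w sigma : R) (I : R -> Prop)
  (x yr yi z h : R -> R)
  (tb t0 xi0 b : R)
  (Hc : 0 < c) (Hl : 0 < l) (Hw : -1 <= w <= 1)
  (HI : is_interval I)
  (Hh : forall t, I t -> 0 < h t)
  (Hz : forall t, I t -> 0 <= z t)
  (Hx' : forall t, I t -> has_deriv_within I x t
     ((- x t + 4 * c * yr t * yi t
       + x t * (x t ^ 2 + (1 + w) / 2 * z t ^ 2)) * h t))
  (Hyr' : forall t, I t -> has_deriv_within I yr t
     (((x t ^ 2 + (1 + w) / 2 * z t ^ 2) * yr t - c * x t * yi t) * h t))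
  (Hyi' : forall t, I t -> has_deriv_within I yi t
     (((x t ^ 2 + (1 + w) / 2 * z t ^ 2) * yi t + c * x t * yr t) * h t))
  (Hz' : forall t, I t -> has_deriv_within I z t
     ((- ((1 + w) / 2) + (x t ^ 2 + (1 + w) / 2 * z t ^ 2)) * z t * h t))
  (Hh' : forall t, I t -> has_deriv_within I h t
     (- (x t ^ 2 + (1 + w) / 2 * z t ^ 2) * h t ^ 2))
  (Hcon1 : forall t, I t ->
     x t ^ 2 + 4 * yr t ^ 2 + z t ^ 2 = 1 - sigma / h t ^ 2)
  (Hcon2 : forall t, I t ->
     yr t ^ 2 + yi t ^ 2 = l ^ 2 / (2 * h t ^ 2))
  (Hsigma : 0 < sigma)
  (Htb : I tb)
  (Hxi0pos : 0 < xi0)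
  (Hxi0 : x tb ^ 2 + (1 + w) / 2 * z tb ^ 2 <= xi0 <= (1 + w) / 2)
  (Ht0I : I t0) (Ht0tb : tb <= t0)
  (Ht0xi : x t0 ^ 2 + (1 + w) / 2 * z t0 ^ 2 = xi0)
  (Ht0min : forall t, I t -> tb <= t ->
     x t ^ 2 + (1 + w) / 2 * z t ^ 2 = xi0 -> t0 <= t)
  (Hsigh : sigma < h tb ^ 2)
  (Hbmax : forall t, tb <= t <= t0 -> sqrt 2 * Rabs (yi t) * h t / l <= b)
  (Hbatt : exists t, tb <= t <= t0 /\ b = sqrt 2 * Rabs (yi t) * h t / l)
  (Hbpos : 0 < b) :
  t0 - tb >=
    1 / (2 * sqrt (2 * xi0)) * (1 / (b * c * l))
    * ((xi0 - (x tb ^ 2 + (1 + w) / 2 * z tb ^ 2))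
       / sqrt (1 - sigma / h tb ^ 2)).
Proof.
  set (A := (1 + w) / 2) in *.
  assert (HA : 0 <= A <= 1) by (unfold A; lra).
  assert (sub : forall t, tb <= t <= t0 -> I t) by (intros t Ht; exact (HI tb t0 t Htb Ht0I Ht)).
  set (F := fun t => x (clamp tb t0 t) ^ 2 + A * z (clamp tb t0 t) ^ 2).
  assert (cx : forall t, continuity_pt (fun s => x (clamp tb t0 s)) t).
  { apply (cont_clamp I); auto. intros t Ht; eexists; apply Hx'; auto. }
  assert (cz : forall t, continuity_pt (fun s => z (clamp tb t0 s)) t).
  { apply (cont_clamp I); auto. intros t Ht; eexists; apply Hz'; auto. }
  assert (ch : forall t, continuity_pt (fun s => h (clamp tb t0 s)) t).
  { apply (cont_clamp I); auto. intros t Ht; eexists; apply Hh'; auto. }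
  assert (contF : continuity F).
  { intros t. apply continuity_pt_ext with
      (fun s => x (clamp tb t0 s) * x (clamp tb t0 s)
         + A * (z (clamp tb t0 s) * z (clamp tb t0 s))).
    { intros; unfold F; ring. }
    exact (continuity_pt_plus _ _ _ (continuity_pt_mult _ _ _ (cx t) (cx t))
      (continuity_pt_mult _ _ _ (continuity_pt_const (fun _ => A) t (fun _ _ => eq_refl))
         (continuity_pt_mult _ _ _ (cz t) (cz t)))). }
  set (xi := fun t => x t ^ 2 + A * z t ^ 2).
  assert (FE : forall t, tb <= t <= t0 -> F t = xi t).
  { intros; unfold F, xi; rewrite clamp_id; auto. }
  assert (Hle : forall t, tb <= t <= t0 -> xi t <= xi0).
  { intros t Ht. destruct (Rle_dec (xi t) xi0) as [|Hn]; auto. exfalso.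
    assert (Hft : F tb <= xi0 < F t).
    { rewrite !FE by lra. unfold xi in *; lra. }
    destruct (IVT_gen F tb t xi0 contF) as [s [Hs1 Hs2]].
    { rewrite Rmin_left, Rmax_right by lra. lra. }
    rewrite Rmin_left, Rmax_right in Hs1 by lra.
    rewrite FE in Hs2 by lra.
    assert (t0 <= s) by (apply Ht0min; [apply sub; lra | lra | exact Hs2]).
    replace t with t0 in Hn by lra. unfold xi in Hn. lra. }
  set (dF := fun t => 2 * x t * ((- x t + 4 * c * yr t * yi t + x t * xi t) * h t)
      + A * (2 * z t * ((- A + xi t) * z t * h t))).
  assert (Hder : forall t, tb < t < t0 -> is_derive F t (dF t)).
  { intros t Ht.
    pose proof (der_clamp I x tb t0 _ t sub Ht (Hx' t (sub t ltac:(lra)))) as hx.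
    pose proof (der_clamp I z tb t0 _ t sub Ht (Hz' t (sub t ltac:(lra)))) as hz.
    pose proof (is_derive_plus _ _ _ _ _ (is_derive_pow _ 2 _ _ hx)
      (is_derive_scal _ _ A _ (is_derive_pow _ 2 _ _ hz))) as H.
    eapply is_derive_eqv; [exact H|].
    unfold dF, xi, plus; simpl. rewrite clamp_id by lra. ring. }
  destruct (MVT_gen F tb t0 dF) as [cc [Hcc HM]].
  { rewrite Rmin_left, Rmax_right by lra. auto. }
  { intros; apply contF. }
  rewrite Rmin_left, Rmax_right in Hcc by lra.
  rewrite !FE in HM by lra.
  assert (Hhc : h cc <= h tb).
  { set (dh := fun t => - xi t * h t ^ 2).
    destruct (MVT_gen (fun s => h (clamp tb t0 s)) tb cc dh) as [c2 [Hc2 HM2]].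
    { rewrite Rmin_left, Rmax_right by lra. intros t Ht.
      apply (der_clamp I h tb t0 _ t sub); [lra|]. apply Hh'; apply sub; lra. }
    { intros; apply ch. }
    rewrite Rmin_left, Rmax_right in Hc2 by lra.
    rewrite !clamp_id in HM2 by lra.
    assert (0 <= xi c2) by (unfold xi; nra).
    unfold dh in HM2. assert (0 <= xi c2 * h c2 ^ 2 * (cc - tb)) by (apply Rmult_le_pos; [apply Rmult_le_pos; [lra|apply pow2_ge_0]|lra]). lra. }
  assert (Icc : I cc) by (apply sub; lra).
  assert (hcpos : 0 < h cc) by auto.
  assert (hbpos : 0 < h tb) by auto.
  set (S := 1 - sigma / h tb ^ 2).
  assert (Spos : 0 < S).
  { unfold S. assert (sigma / h tb ^ 2 < 1); [|lra].
    apply (Rmult_lt_reg_r (h tb ^ 2)); [nra|].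
    unfold Rdiv; rewrite Rmult_assoc, Rinv_l by nra. lra. }
  set (q := sqrt 2). set (X := sqrt xi0). set (Y := sqrt S).
  assert (qq : q * q = 2) by (apply sqrt_sqrt; lra).
  assert (XX : X * X = xi0) by (apply sqrt_sqrt; lra).
  assert (YY : Y * Y = S) by (apply sqrt_sqrt; lra).
  assert (qp : 0 < q) by (apply sqrt_lt_R0; lra).
  assert (Xp : 0 < X) by (apply sqrt_lt_R0; lra).
  assert (Yp : 0 < Y) by (apply sqrt_lt_R0; lra).
  assert (E2 : sqrt (2 * xi0) = q * X) by (apply sqrt_mult; lra).
  rewrite E2. fold S. fold Y.
  set (K := 2 * (q * X) * b * c * l * Y).
  assert (Kp : 0 < K) by (unfold K; repeat apply Rmult_lt_0_compat; lra).
  assert (xic : xi cc <= xi0) by (apply Hle; lra).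
  assert (Hxb : Rabs (x cc) <= X).
  { apply abs_le_sq; [lra|]. assert (0 <= A * z cc ^ 2) by nra. unfold xi in xic. nra. }
  assert (Hyrb : Rabs (2 * yr cc) <= Y).
  { apply abs_le_sq; [lra|].
    pose proof (Hcon1 cc Icc).
    assert (sigma / h tb ^ 2 <= sigma / h cc ^ 2).
    { unfold Rdiv. apply Rmult_le_compat_l; [lra|]. apply Rinv_le_contravar; nra. }
    assert (Y ^ 2 = S) by (rewrite <- YY; ring). rewrite H1. unfold S. assert (0 <= x cc ^ 2) by apply pow2_ge_0. assert (0 <= z cc ^ 2) by apply pow2_ge_0. lra. }
  rewrite Rabs_mult, (Rabs_right 2) in Hyrb by lra.
  assert (Hyib : q * (Rabs (yi cc) * h cc) <= b * l).
  { pose proof (Hbmax cc ltac:(lra)) as Hb. fold q in Hb.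
    apply (Rmult_le_compat_r l) in Hb; [|lra].
    replace (q * Rabs (yi cc) * h cc / l * l) with (q * (Rabs (yi cc) * h cc)) in Hb
      by (field; lra). lra. }
  assert (HdF : dF cc <= K).
  { assert (H1 : dF cc <= 8 * c * (x cc * yr cc * yi cc * h cc)).
    { unfold dF. assert (0 <= h cc * x cc ^ 2) by nra.
      assert (0 <= A * h cc * z cc ^ 2) by (apply Rmult_le_pos; nra).
      assert (xi cc <= A) by lra.
      replace (x cc * xi cc) with (x cc * xi cc) by ring. nra. }
    assert (H2 : x cc * yr cc * yi cc * h cc <= Rabs (x cc) * Rabs (yr cc) * (Rabs (yi cc) * h cc)).
    { eapply Rle_trans; [apply Rle_abs|]. rewrite !Rabs_mult, (Rabs_right (h cc)) by lra.
      right; ring. }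
    set (P := Rabs (x cc) * Rabs (yr cc)).
    set (Z := Rabs (yi cc) * h cc).
    assert (Pb : 0 <= P <= X * (Y / 2)).
    { unfold P; split; [apply Rmult_le_pos; apply Rabs_pos|].
      apply Rmult_le_compat; try apply Rabs_pos; lra. }
    assert (Zp : 0 <= Z) by (unfold Z; apply Rmult_le_pos; [apply Rabs_pos|lra]).
    assert (q * (8 * c * (P * Z)) <= q * K).
    { replace (q * (8 * c * (P * Z))) with (8 * c * P * (q * Z)) by ring.
      apply Rle_trans with (8 * c * P * (b * l)).
      { apply Rmult_le_compat_l; [nra|]. exact Hyib. }
      unfold K. replace (q * (2 * (q * X) * b * c * l * Y)) with (4 * X * Y * b * c * l)
        by (transitivity (2 * (q * q) * X * b * c * l * Y); [rewrite qq; ring | ring]).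
      assert (0 <= (8*c*b*l) * (X*(Y/2) - P)) by (apply Rmult_le_pos; [assert (0 < 8*c*b*l) by (repeat apply Rmult_lt_0_compat; lra); lra | lra]). nra. }
    assert (8 * c * (P * Z) <= K) by nra.
    unfold P, Z in *. nra. }
  apply Rle_ge.
  replace (1 / (2 * (q * X)) * (1 / (b * c * l)) * ((xi0 - (x tb ^ 2 + A * z tb ^ 2)) / Y))
    with ((xi0 - xi tb) / K) by (unfold K, xi; field; repeat split; lra).
  unfold Rdiv. apply Rmult_le_reg_r with K; auto.
  rewrite Rmult_assoc, Rinv_l by lra.
  unfold xi in *. rewrite Ht0xi in HM. nra.
Qed.
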